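(* In $\mathbb{C}^3\otimes\mathbb{C}^3\otimes\mathbb{C}^4$ (parties Alice $A$, Bob $B$, Charlie $C$), the strongly nonlocal unextendible product basis $\mathcal{U}=\bigcup_{i=1}^3(\mathcal{A}_i\cup\mathcal{B}_i)\cup\mathcal{F}\cup\{|S\rangle\}$ defined in the context can be perfectly distinguished by local operations and classical communication when, as an additional resource, Alice and Bob share one copy of the two-qubit maximally entangled state $|\Phi(2)\rangle=|00\rangle+|11\rangle$, Bob and Charlie share one copy of $|\Phi(2)\rangle$, and Alice and Charlie share no entanglement. This consumes $2$ ebits of entanglement.
   Context: Computational bases $\{|0\rangle,|1\rangle,|2\rangle\}$ for $A,B$ and $\{|0\rangle,\dots,|3\rangle\}$ for $C$; $w_3=e^{2\pi\sqrt{-1}/3}$; states are unnormalized. For $X\in\{A,B\}$ and $s\in\{0,1\}$: $|\eta_s\rangle_X=|0\rangle+(-1)^s|1\rangle$, $|\xi_s\rangle_X=|1\rangle+(-1)^s|2\rangle$. For $s\in\{0,1,2\}$: $|\eta_s\rangle_C=\sum_{t=0}^2 w_3^{st}|t\rangle$, $|\xi_s\rangle_C=\sum_{t=0}^2w_3^{st}|t+1\rangle$. Define $\mathcal{A}_1=\{|\xi_i\rangle_A|0\rangle_B|\eta_k\rangle_C:(i,k)\in\{0,1\}\times\{0,1,2\}\setminus\{(0,0)\}\}$, $\mathcal{A}_2=\{|\xi_i\rangle_A|\eta_j\rangle_B|3\rangle_C:(i,j)\in\{0,1\}^2\setminus\{(0,0)\}\}$, $\mathcal{A}_3=\{|2\rangle_A|\xi_j\rangle_B|\eta_k\rangle_C:(j,k)\in\{0,1\}\times\{0,1,2\}\setminus\{(0,0)\}\}$,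 $\mathcal{B}_1=\{|\eta_i\rangle_A|2\rangle_B|\xi_k\rangle_C:(i,k)\in\{0,1\}\times\{0,1,2\}\setminus\{(0,0)\}\}$, $\mathcal{B}_2=\{|\eta_i\rangle_A|\xi_j\rangle_B|0\rangle_C:(i,j)\in\{0,1\}^2\setminus\{(0,0)\}\}$, $\mathcal{B}_3=\{|0\rangle_A|\eta_j\rangle_B|\xi_k\rangle_C:(j,k)\in\{0,1\}\times\{0,1,2\}\setminus\{(0,0)\}\}$, $\mathcal{F}=\{|1\rangle_A|1\rangle_B(|1\rangle-|2\rangle)_C\}$, $|S\rangle=(|0\rangle+|1\rangle+|2\rangle)_A(|0\rangle+|1\rangle+|2\rangle)_B(|0\rangle+|1\rangle+|2\rangle+|3\rangle)_C$. This is a set of 28 mutually orthogonal product states. ''Perfectly distinguished'' means: given an unknown state secretly chosen from the set (together with the shared entangled resource), the parties can determine with certainty which state it is using only LOCC. *)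

(* Defs.v *)
From mathcomp Require Import all_boot all_order all_algebra all_field.
Set Implicit Arguments. Unset Strict Implicit. Unset Printing Implicit Defensive.
Import Order.TTheory GRing.Theory Num.Theory.
Local Open Scope ring_scope.

(* w3 = exp(2 pi i / 3) *)
Definition w3 : algC := (-1 + 'i * sqrtC 3%:R) / 2%:R.

Definition ket (n : nat) (j : nat) : 'I_n -> algC := fun x => (x == j :> nat)%:R.
Arguments ket : clear implicits.

Definition etaAB (s : nat) : 'I_3 -> algC :=
  fun t => if (t == 0 :> nat) then 1 else if (t == 1 :> nat) then (-1) ^+ s else 0.
Definition xiAB (s : nat) : 'I_3 -> algC :=
  fun t => if (t == 1 :> nat) then 1 else if (t == 2 :> nat) then (-1) ^+ s else 0.
Definition etaC (s : nat) : 'I_4 -> algC :=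
  fun t => if (t < 3)%N then w3 ^+ (s * t) else 0.
Definition xiC (s : nat) : 'I_4 -> algC :=
  fun t => if (0 < t)%N then w3 ^+ (s * t.-1) else 0.

Definition idx3 := ('I_3 * 'I_3 * 'I_4)%type.
Definition pstate (a : 'I_3 -> algC) (b : 'I_3 -> algC) (c : 'I_4 -> algC) :
  idx3 -> algC := fun x => a x.1.1 * b x.1.2 * c x.2.

Definition pairs23 : seq (nat * nat) :=
  [seq p <- [seq (i, k) | i <- [:: 0; 1]%N, k <- [:: 0; 1; 2]%N] | p != (0, 0)%N].
Definition pairs22 : seq (nat * nat) :=
  [seq p <- [seq (i, j) | i <- [:: 0; 1]%N, j <- [:: 0; 1]%N] | p != (0, 0)%N].

Definition setA1 := [seq pstate (xiAB p.1) (ket 3 0) (etaC p.2) | p <- pairs23].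
Definition setA2 := [seq pstate (xiAB p.1) (etaAB p.2) (ket 4 3) | p <- pairs22].
Definition setA3 := [seq pstate (ket 3 2) (xiAB p.1) (etaC p.2) | p <- pairs23].
Definition setB1 := [seq pstate (etaAB p.1) (ket 3 2) (xiC p.2) | p <- pairs23].
Definition setB2 := [seq pstate (etaAB p.1) (xiAB p.2) (ket 4 0) | p <- pairs22].
Definition setB3 := [seq pstate (ket 3 0) (etaAB p.1) (xiC p.2) | p <- pairs23].
Definition setF := [:: pstate (ket 3 1) (ket 3 1) (fun t => ket 4 1 t - ket 4 2 t)].
Definition stopper : idx3 -> algC := pstate (fun _ => 1) (fun _ => 1) (fun _ => 1).

Definition UPB : seq (idx3 -> algC) :=
  setA1 ++ setA2 ++ setA3 ++ setB1 ++ setB2 ++ setB3 ++ setF ++ [:: stopper].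

(* Alice: A (dim 3) x a1 (qubit, ebit with Bob)
   Bob:   B (dim 3) x b1 (qubit, ebit with Alice) x b2 (qubit, ebit with Charlie)
   Charlie: C (dim 4) x c2 (qubit, ebit with Bob) *)
Definition LA := ('I_3 * 'I_2)%type.
Definition LB := ('I_3 * 'I_2 * 'I_2)%type.
Definition LC := ('I_4 * 'I_2)%type.
Definition gidx := (LA * LB * LC)%type.
Definition gstate := gidx -> algC.

(* |Phi(2)> = |00> + |11> (unnormalized) *)
Definition Phi2 (x y : 'I_2) : algC := (x == y :> nat)%:R.

Definition with_resource (psi : idx3 -> algC) : gstate :=
  fun g => let: (a, a1, (b, b1, b2), (c, c2)) := g in
           psi (a, b, c) * Phi2 a1 b1 * Phi2 b2 c2.

(* A protocol is a finite tree: at each node one party applies a local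
   instrument given by Kraus operators K (matrices indexed by its local basis,
   K z x = <z|K|x>), all outcomes are broadcast, and the continuation depends on
   the outcome. A leaf announces a guess (an index into the list of states). *)
Inductive protocol : Type :=
| Leaf of nat
| StepA of seq ((LA -> LA -> algC) * protocol)
| StepB of seq ((LB -> LB -> algC) * protocol)
| StepC of seq ((LC -> LC -> algC) * protocol).

Definition complete (T : finType) (ks : seq (T -> T -> algC)) : Prop :=
  forall x y : T, \sum_(K <- ks) \sum_(z : T) (K z x)^* * K z y = (x == y)%:R.

Fixpoint valid (P : protocol) : Prop :=
  match P with
  | Leaf _ => True
  | StepA br => complete (map fst br) /\
      (fix vs (l : seq ((LA -> LA -> algC) * protocol)) : Prop :=
         match l with [::] => True | (_, Q) :: l' => valid Q /\ vs l' end) br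
  | StepB br => complete (map fst br) /\
      (fix vs (l : seq ((LB -> LB -> algC) * protocol)) : Prop :=
         match l with [::] => True | (_, Q) :: l' => valid Q /\ vs l' end) br
  | StepC br => complete (map fst br) /\
      (fix vs (l : seq ((LC -> LC -> algC) * protocol)) : Prop :=
         match l with [::] => True | (_, Q) :: l' => valid Q /\ vs l' end) br
  end.

Definition applyA (K : LA -> LA -> algC) (psi : gstate) : gstate :=
  fun g => \sum_(x : LA) K g.1.1 x * psi (x, g.1.2, g.2).
Definition applyB (K : LB -> LB -> algC) (psi : gstate) : gstate :=
  fun g => \sum_(x : LB) K g.1.2 x * psi (g.1.1, x, g.2).
Definition applyC (K : LC -> LC -> algC) (psi : gstate) : gstate :=
  fun g => \sum_(x : LC) K g.2 x * psi (g.1.1, g.1.2, x).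

(* Running P on (unnormalized) state psi never produces, with nonzero
   probability, a leaf whose guess differs from i. *)
Fixpoint always_guesses (P : protocol) (psi : gstate) (i : nat) : Prop :=
  match P with
  | Leaf g => (forall x, psi x = 0) \/ g = i
  | StepA br =>
      (fix cs (l : seq ((LA -> LA -> algC) * protocol)) : Prop :=
         match l with [::] => True
         | (K, Q) :: l' => always_guesses Q (applyA K psi) i /\ cs l' end) br
  | StepB br =>
      (fix cs (l : seq ((LB -> LB -> algC) * protocol)) : Prop :=
         match l with [::] => True
         | (K, Q) :: l' => always_guesses Q (applyB K psi) i /\ cs l' end) br
  | StepC br =>
      (fix cs (l : seq ((LC -> LC -> algC) * protocol)) : Prop :=
         match l with [::] => True
         | (K, Q) :: l' => always_guesses Q (applyC K psi) i /\ cs l' end) br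
  end.

(* The list of states S is perfectly LOCC-distinguishable (with the resource
   already included in the states) *)
Definition LOCC_perfectly_distinguishable (S : seq gstate) : Prop :=
  exists P : protocol, valid P /\
    forall i : nat, (i < size S)%N -> always_guesses P (nth (fun _ => 0) S i) i.

(* Main.v *)
Require Import Defs.
From Stdlib Require Import ZArith FunctionalExtensionality.
From mathcomp Require Import all_boot all_order all_algebra all_field.
From mathcomp Require Import ssrZ ring.
Set Implicit Arguments. Unset Strict Implicit. Unset Printing Implicit Defensive.
Import Order.TTheory GRing.Theory Num.Theory.
Local Open Scope ring_scope.

Definition Zw := (Z * Z)%type.
Definition z0 : Zw := (Z0, Z0).
Definition z1 : Zw := (Zpos xH, Z0).
Definition zadd (x y : Zw) : Zw := (Z.add x.1 y.1, Z.add x.2 y.2).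
Definition zmul (x y : Zw) : Zw :=
  (Z.sub (Z.mul x.1 y.1) (Z.mul x.2 y.2),
   Z.sub (Z.add (Z.mul x.1 y.2) (Z.mul x.2 y.1)) (Z.mul x.2 y.2)).
Definition zconj (x : Zw) : Zw := (Z.sub x.1 x.2, Z.opp x.2).
Definition zeq (x y : Zw) : bool := Z.eqb x.1 y.1 && Z.eqb x.2 y.2.

Definition zr (z : Z) : algC := (int_of_Z z)%:~R.
Definition phi (x : Zw) : algC := zr x.1 + zr x.2 * w3.

Lemma zrD a b : zr (Z.add a b) = zr a + zr b.
Proof. by rewrite /zr (raddfD int_of_Z a b) rmorphD. Qed.
Lemma zrM a b : zr (Z.mul a b) = zr a * zr b.
Proof. by rewrite /zr (rmorphM int_of_Z a b) rmorphM. Qed.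
Lemma zrN a : zr (Z.opp a) = - zr a.
Proof. by rewrite /zr (raddfN int_of_Z a) rmorphN. Qed.
Lemma zrB a b : zr (Z.sub a b) = zr a - zr b.
Proof. by rewrite -zrN -zrD. Qed.
Lemma zr0 : zr Z0 = 0. Proof. by []. Qed.
Lemma zr1 : zr (Zpos xH) = 1. Proof. by []. Qed.
Lemma zr_conj a : (zr a)^* = zr a.
Proof. by rewrite /zr rmorph_int. Qed.

Lemma w3_sq : w3 ^+ 2 = -1 - w3.
Proof.
have hx : ('i * sqrtC (3%:R : algC)) ^+ 2 = - 3%:R.
  by rewrite exprMn sqrCi sqrtCK mulN1r.
have h2 : (2%:R : algC) != 0 by rewrite pnatr_eq0.
apply/eqP; rewrite -subr_eq0; apply/eqP.
have -> : w3 ^+ 2 - (-1 - w3) = (('i * sqrtC 3%:R) ^+ 2 + 3%:R) / 4%:R.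
  by rewrite /w3; field.
by rewrite exprMn sqrCi sqrtCK mulN1r addNr mul0r.
Qed.

Lemma cD (x y : algC) : (x + y)^* = x^* + y^*. Proof. exact: rmorphD. Qed.
Lemma cM (x y : algC) : (x * y)^* = x^* * y^*. Proof. exact: rmorphM. Qed.
Lemma cN (x : algC) : (- x)^* = - x^*. Proof. exact: rmorphN. Qed.
Lemma cV (x : algC) : (x^-1)^* = (x^*)^-1. Proof. exact: fmorphV. Qed.
Lemma c1 : (1 : algC)^* = 1. Proof. exact: rmorph1. Qed.
Lemma cn n : (n%:R : algC)^* = n%:R. Proof. exact: rmorph_nat. Qed.

Lemma w3_conj : w3^* = -1 - w3.
Proof.
rewrite /w3 cM cV cD cN c1 cM !cn conjCi geC0_conj ?sqrtC_ge0 ?ler0n //.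
have h2 : (2%:R : algC) != 0 by rewrite pnatr_eq0.
by field.
Qed.

Lemma w3_cube : w3 ^+ 3 = 1.
Proof. by rewrite exprS w3_sq mulrBr mulrN1 -expr2 w3_sq; ring. Qed.

Lemma phiD x y : phi (zadd x y) = phi x + phi y.
Proof. rewrite /phi /zadd /= !zrD; ring. Qed.
Lemma phiM x y : phi (zmul x y) = phi x * phi y.
Proof.
rewrite /phi /zmul /= !zrB !zrD !zrM.
have -> : (zr x.1 + zr x.2 * w3) * (zr y.1 + zr y.2 * w3) =
   zr x.1 * zr y.1 + (zr x.1 * zr y.2 + zr x.2 * zr y.1) * w3 + zr x.2 * zr y.2 * w3 ^+ 2 by ring.
rewrite w3_sq; ring.
Qed.
Lemma phi_conj x : phi (zconj x) = (phi x)^*.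
Proof.
rewrite /phi /zconj /= cD cM !zr_conj w3_conj zrB zrN; ring.
Qed.
Lemma phi0 : phi z0 = 0. Proof. by rewrite /phi /= zr0 mul0r addr0. Qed.
Lemma phi1 : phi z1 = 1. Proof. by rewrite /phi /= zr0 zr1 mul0r addr0. Qed.
Lemma zeqP x y : zeq x y -> x = y.
Proof. by case: x y => a b [c d]; rewrite /zeq /= => /andP[/Z.eqb_spec -> /Z.eqb_spec ->]. Qed.

Definition sst := seq (gidx * Zw).
Definition interp (s : sst) (g : gidx) : algC := \sum_(p <- s | p.1 == g) phi p.2.

Lemma interp_cons p s g :
  interp (p :: s) g = (if p.1 == g then phi p.2 else 0) + interp s g.
Proof. by rewrite /interp big_cons; case: ifP => _; rewrite ?add0r. Qed.

Fixpoint ins (p : gidx * Zw) (s : sst) : sst :=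
  match s with
  | [::] => [:: p]
  | q :: s' => if q.1 == p.1 then (q.1, zadd q.2 p.2) :: s' else q :: ins p s'
  end.

Lemma interp_ins p s g : interp (ins p s) g = interp (p :: s) g.
Proof.
elim: s => [//|q s IH] /=.
case: eqP => [e|_].
  rewrite !interp_cons /= phiD e.
  by case: ifP => _; ring.
by rewrite !interp_cons IH interp_cons; ring.
Qed.

Definition dropz (s : sst) : sst := filter (fun p => ~~ zeq p.2 z0) s.
Lemma interp_dropz s g : interp (dropz s) g = interp s g.
Proof.
elim: s => [//|p s IH] /=.
case: ifP => h; rewrite !interp_cons IH //.
move/negbFE/zeqP: h => ->; rewrite phi0; by case: ifP; rewrite add0r.
Qed.

Definition norm (s : sst) : sst := dropz (foldr ins [::] (dropz s)).
Lemma interp_norm s g : interp (norm s) g = interp s g.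
Proof.
rewrite /norm interp_dropz -[RHS]interp_dropz.
elim: (dropz s) => [//|p s' IH] /=.
by rewrite interp_ins !interp_cons IH.
Qed.

Definition allz (s : sst) : bool := all (fun p => zeq p.2 z0) s.
Lemma allz_interp s g : allz s -> interp s g = 0.
Proof.
elim: s => [|p s IH]; first by rewrite /interp big_nil.
rewrite /allz /= => /andP[/zeqP h hs].
by rewrite interp_cons IH // h phi0 addr0; case: ifP.
Qed.

Lemma sum_enum_cond (T : finType) (P : pred T) (F : T -> algC) :
  \sum_(z <- enum T | P z) F z = \sum_(z | P z) F z.
Proof. by rewrite big_enum_cond; apply: eq_bigl => z; rewrite inE. Qed.

Lemma sum_list_cond (T : finType) (r : seq T) (P : pred T) (F : T -> algC) :
  uniq r -> (forall x, x \in r) -> \sum_(z <- r | P z) F z = \sum_(z | P z) F z.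
Proof.
move=> hu ha; rewrite -sum_enum_cond; apply: perm_big.
by apply: uniq_perm => //; [exact: enum_uniq | move=> x; rewrite mem_enum ha].
Qed.

Lemma sum_pick (T : finType) (a : T) (b : bool) (F : T -> algC) :
  \sum_(x : T) (if (x == a) && b then F x else 0) = if b then F a else 0.
Proof.
case: b.
  by rewrite -big_mkcond /= (eq_bigl (fun x => x == a)) ?big_pred1_eq // => x; rewrite andbT.
by rewrite big1 // => x _; rewrite andbF.
Qed.

Section Party.
Variable T : finType.
Variable get : gidx -> T.
Variable set : gidx -> T -> gidx.
Variable r : seq T.
Hypothesis r_uniq : uniq r.
Hypothesis r_all : forall x, x \in r.
Hypothesis L1 : forall h z g, (set h z == g) = (z == get g) && (set h (get g) == g).
Hypothesis L2 : forall g h, (set g (get h) == h) = (set h (get g) == g).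

Definition app' (e : T -> T -> Zw) (s : sst) : sst :=
  norm (flatten [seq [seq (set p.1 z, zmul (e z (get p.1)) p.2) | z <- r] | p <- s]).

Definition applyG (K : T -> T -> algC) (psi : gidx -> algC) : gidx -> algC :=
  fun g => \sum_(x : T) K (get g) x * psi (set g x).

Lemma app'_ok e s c d g :
  applyG (fun z x => c * phi (e z x)) (fun g => d * interp s g) g = (c * d) * interp (app' e s) g.
Proof.
have NF : interp (app' e s) g =
   \sum_(p <- s) (if set p.1 (get g) == g then phi (e (get g) (get p.1)) * phi p.2 else 0).
  rewrite /app' interp_norm /interp big_flatten /= big_map.
  apply: eq_bigr => p _.
  rewrite big_map /= big_mkcond /=.
  rewrite (eq_bigr (fun z => if (z == get g) && (set p.1 (get g) == g) then
                  phi (e z (get p.1)) * phi p.2 else 0)); last first.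
    by move=> z _; rewrite L1 phiM.
  rewrite -big_mkcond sum_list_cond // big_mkcond /=.
  by rewrite sum_pick.
rewrite NF /applyG /interp.
under eq_bigr => x _ do rewrite mulr_sumr big_mkcond /= mulr_sumr.
rewrite exchange_big /= mulr_sumr; apply: eq_bigr => p _.
rewrite (eq_bigr (fun x => c * d * (if (x == get p.1) && (set g (get p.1) == p.1) then
                  phi (e (get g) x) * phi p.2 else 0))); last first.
  move=> x _; rewrite eq_sym L1.
  by case: ifP => _; rewrite ?mulr0 // mulrCA !mulrA [c * d]mulrC.
by rewrite -mulr_sumr sum_pick L2.
Qed.
End Party.

Definition o2 : seq 'I_2 := [:: @Ordinal 2 0 isT; @Ordinal 2 1 isT].
Definition o3 : seq 'I_3 := [:: @Ordinal 3 0 isT; @Ordinal 3 1 isT; @Ordinal 3 2 isT].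
Definition o4 : seq 'I_4 := [:: @Ordinal 4 0 isT; @Ordinal 4 1 isT; @Ordinal 4 2 isT; @Ordinal 4 3 isT].
Lemma o2_all x : x \in o2. Proof. by case: x => [[|[|m]] hm]. Qed.
Lemma o3_all x : x \in o3. Proof. by case: x => [[|[|[|m]]] hm]. Qed.
Lemma o4_all x : x \in o4. Proof. by case: x => [[|[|[|[|m]]]] hm]. Qed.
Definition rLA : seq LA := [seq (a, x) | a <- o3, x <- o2].
Definition rLB : seq LB := [seq (a, x) | a <- rLA, x <- o2].
Definition rLC : seq LC := [seq (a, x) | a <- o4, x <- o2].
Definition rG : seq gidx := [seq (a, x) | a <- [seq (a, b) | a <- rLA, b <- rLB], x <- rLC].
Lemma rLA_all x : x \in rLA. Proof. by case: x => a b; apply: allpairs_f; [apply: o3_all|apply: o2_all]. Qed.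
Lemma rLB_all x : x \in rLB. Proof. by case: x => a b; apply: allpairs_f; [apply: rLA_all|apply: o2_all]. Qed.
Lemma rLC_all x : x \in rLC. Proof. by case: x => a b; apply: allpairs_f; [apply: o4_all|apply: o2_all]. Qed.
Lemma rG_all x : x \in rG.
Proof.
case: x => [[a b] c]; apply: allpairs_f; last exact: rLC_all.
by apply: allpairs_f; [apply: rLA_all|apply: rLB_all].
Qed.
Lemma rLA_uniq : uniq rLA. Proof. by vm_compute. Qed.
Lemma rLB_uniq : uniq rLB. Proof. by vm_compute. Qed.
Lemma rLC_uniq : uniq rLC. Proof. by vm_compute. Qed.
Lemma rG_uniq : uniq rG. Proof. by vm_compute. Qed.

Inductive kr :=
| KDiag of seq nat
| KVec of seq Zw
| KTele of seq bool & bool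
| KBob of seq (nat * bool * bool) & bool & bool & bool & bool.

Definition zm1 : Zw := (Zneg xH, Z0).

Definition eP (n : nat) (k : kr) (z x : 'I_n * 'I_2) : Zw :=
  match k with
  | KDiag P => if (z == x) && ((x.1 : nat) \in P) then z1 else z0
  | KVec v => if z.2 == x.2 then zmul (nth z0 v z.1) (zconj (nth z0 v x.1)) else z0
  | KTele f fl => if (z.1 == x.1) && ((z.2 : nat) == 0%N) &&
                     ((x.2 : nat) == (nth false f x.1 (+) fl : nat)) then z1 else z0
  | KBob _ _ _ _ _ => z0
  end.
Definition eA := @eP 3.
Definition eC := @eP 4.
Definition eB (k : kr) (z x : LB) : Zw :=
  match k with
  | KDiag P => if (z == x) && ((x.1.1 : nat) \in P) then z1 else z0
  | KVec v => if (z.1.2 == x.1.2) && (z.2 == x.2) then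
                zmul (nth z0 v z.1.1) (zconj (nth z0 v x.1.1)) else z0
  | KBob SS fa fc s t =>
      if (z.1.1 == x.1.1) && ((z.1.2 : nat) == 0%N) && ((z.2 : nat) == 0%N) &&
         (((x.1.1 : nat), ((x.1.2 : nat) == 1%N) (+) fa, ((x.2 : nat) == 1%N) (+) fc) \in SS)
      then (if (s && ((x.1.2 : nat) == 1%N)) (+) (t && ((x.2 : nat) == 1%N)) then zm1 else z1)
      else z0
  | KTele _ _ => z0
  end.

Definition znorm (c : Zw) : Z := Z.add (Z.sub (Z.mul c.1 c.1) (Z.mul c.1 c.2)) (Z.mul c.2 c.2).
Definition den (k : kr) : Z :=
  match k with
  | KVec v => foldr (fun c acc => Z.add (znorm c) acc) Z0 v
  | KBob _ _ _ _ _ => Zpos (xO xH)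
  | _ => Zpos xH
  end.
Definition sc (k : kr) : algC := (zr (den k))^-1.

Definition KA (k : kr) : LA -> LA -> algC := fun z x => sc k * phi (eA k z x).
Definition KB (k : kr) : LB -> LB -> algC := fun z x => sc k * phi (eB k z x).
Definition KC (k : kr) : LC -> LC -> algC := fun z x => sc k * phi (eC k z x).

Inductive prot' :=
| PL of nat
| PA of seq (kr * prot')
| PB of seq (kr * prot')
| PC of seq (kr * prot').

Fixpoint trans (p : prot') : protocol :=
  match p with
  | PL g => Leaf g
  | PA br => StepA (map (fun kq => (KA kq.1, trans kq.2)) br)
  | PB br => StepB (map (fun kq => (KB kq.1, trans kq.2)) br)
  | PC br => StepC (map (fun kq => (KC kq.1, trans kq.2)) br)
  end.

Definition getA (g : gidx) : LA := g.1.1.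
Definition setA (g : gidx) (x : LA) : gidx := (x, g.1.2, g.2).
Definition getB (g : gidx) : LB := g.1.2.
Definition setB (g : gidx) (x : LB) : gidx := (g.1.1, x, g.2).
Definition getC (g : gidx) : LC := g.2.
Definition setC (g : gidx) (x : LC) : gidx := (g.1.1, g.1.2, x).

Definition appA k s := app' getA setA rLA (eA k) s.
Definition appB k s := app' getB setB rLB (eB k) s.
Definition appC k s := app' getC setC rLC (eC k) s.

Fixpoint check (p : prot') (s : sst) (i : nat) {struct p} : bool :=
  if allz s then true else
  match p with
  | PL g => g == i
  | PA br => all (fun kq => check kq.2 (appA kq.1 s) i) br
  | PB br => all (fun kq => check kq.2 (appB kq.1 s) i) br
  | PC br => all (fun kq => check kq.2 (appC kq.1 s) i) br
  end.

Fixpoint Forall2' (P : prot' -> Prop) (l : seq (kr * prot')) : Prop :=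
  match l with [::] => True | kq :: l' => P kq.2 /\ Forall2' P l' end.

Definition prot'_ind2 (P : prot' -> Prop) (HL : forall g, P (PL g))
  (HA : forall br, Forall2' P br -> P (PA br))
  (HB : forall br, Forall2' P br -> P (PB br))
  (HC : forall br, Forall2' P br -> P (PC br)) : forall p, P p :=
  fix F p := match p with
  | PL g => HL g
  | PA br => HA br ((fix G l : Forall2' P l :=
                       match l with [::] => I | kq :: l' => conj (F kq.2) (G l') end) br)
  | PB br => HB br ((fix G l : Forall2' P l :=
                       match l with [::] => I | kq :: l' => conj (F kq.2) (G l') end) br)
  | PC br => HC br ((fix G l : Forall2' P l :=
                       match l with [::] => I | kq :: l' => conj (F kq.2) (G l') end) br)
  end.

Lemma LA1 h z g : (setA h z == g) = (z == getA g) && (setA h (getA g) == g).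
Proof. by case: g => [[ga gb] gc]; rewrite /setA /getA /= !xpair_eqE eqxx /= andbA. Qed.
Lemma LA2 g h : (setA g (getA h) == h) = (setA h (getA g) == g).
Proof.
case: g => [[ga gb] gc]; case: h => [[ha hb] hc]; rewrite /setA /getA /=.
by apply/eqP/eqP => -[-> ->].
Qed.
Lemma LB1 h z g : (setB h z == g) = (z == getB g) && (setB h (getB g) == g).
Proof. by case: g => [[ga gb] gc]; rewrite /setB /getB /= !xpair_eqE eqxx /= andbT andbA [(z == _) && _]andbC. Qed.
Lemma LB2 g h : (setB g (getB h) == h) = (setB h (getB g) == g).
Proof.
case: g => [[ga gb] gc]; case: h => [[ha hb] hc]; rewrite /setB /getB /=.
by apply/eqP/eqP => -[-> ->].
Qed.
Lemma LC1 h z g : (setC h z == g) = (z == getC g) && (setC h (getC g) == g).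
Proof. by case: g => [[ga gb] gc]; rewrite /setC /getC /= !xpair_eqE eqxx /= andbT andbC. Qed.
Lemma LC2 g h : (setC g (getC h) == h) = (setC h (getC g) == g).
Proof.
case: g => [[ga gb] gc]; case: h => [[ha hb] hc]; rewrite /setC /getC /=.
by apply/eqP/eqP => -[-> ->].
Qed.

Lemma applyA_G K psi : applyA K psi = applyG getA setA K psi. Proof. by []. Qed.
Lemma applyB_G K psi : applyB K psi = applyG getB setB K psi. Proof. by []. Qed.
Lemma applyC_G K psi : applyC K psi = applyG getC setC K psi. Proof. by []. Qed.

Lemma applyG0 (T : finType) get set (K : T -> T -> algC) (psi : gidx -> algC) :
  (forall x, psi x = 0) -> forall x, applyG get set K psi x = 0.
Proof. by move=> h x; rewrite /applyG big1 // => y _; rewrite h mulr0. Qed.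

Lemma ag_zero p i : forall psi, (forall x, psi x = 0) -> always_guesses (trans p) psi i.
Proof.
elim/prot'_ind2: p => [g|br IH|br IH|br IH] psi h /=; first by left.
- elim: br IH => [//|[k q] br IHbr] /= [Hq Hbr]; split; last exact: IHbr.
  by apply: Hq; rewrite applyA_G; apply: applyG0.
- elim: br IH => [//|[k q] br IHbr] /= [Hq Hbr]; split; last exact: IHbr.
  by apply: Hq; rewrite applyB_G; apply: applyG0.
- elim: br IH => [//|[k q] br IHbr] /= [Hq Hbr]; split; last exact: IHbr.
  by apply: Hq; rewrite applyC_G; apply: applyG0.
Qed.

Lemma check_sound p i : forall s d, check p s i ->
  always_guesses (trans p) (fun g => d * interp s g) i.
Proof.
elim/prot'_ind2: p => [g|br IH|br IH|br IH] s d;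
  (case hz: (allz s); first by move=> _; apply: ag_zero => x; rewrite allz_interp // mulr0);
  rewrite /= hz.
- by move/eqP => ->; right.
- elim: br IH => [//|[k q] br IHbr] /= [Hq Hbr] /andP[hq hbr]; split; last exact: IHbr.
  have -> : applyA (KA k) (fun g => d * interp s g) = fun g => (sc k * d) * interp (appA k s) g.
    by apply: functional_extensionality => g; rewrite applyA_G /KA (app'_ok (r := rLA)) //; solve [exact: rLA_uniq|exact: rLA_all|exact: LA1|exact: LA2].
  exact: Hq.
- elim: br IH => [//|[k q] br IHbr] /= [Hq Hbr] /andP[hq hbr]; split; last exact: IHbr.
  have -> : applyB (KB k) (fun g => d * interp s g) = fun g => (sc k * d) * interp (appB k s) g.
    by apply: functional_extensionality => g; rewrite applyB_G /KB (app'_ok (r := rLB)) //; solve [exact: rLB_uniq|exact: rLB_all|exact: LB1|exact: LB2].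
  exact: Hq.
- elim: br IH => [//|[k q] br IHbr] /= [Hq Hbr] /andP[hq hbr]; split; last exact: IHbr.
  have -> : applyC (KC k) (fun g => d * interp s g) = fun g => (sc k * d) * interp (appC k s) g.
    by apply: functional_extensionality => g; rewrite applyC_G /KC (app'_ok (r := rLC)) //; solve [exact: rLC_uniq|exact: rLC_all|exact: LC1|exact: LC2].
  exact: Hq.
Qed.

Definition zsum {X : Type} (l : seq X) (f : X -> Zw) : Zw :=
  foldr (fun z acc => zadd (f z) acc) z0 l.
Lemma phi_zsum {X : Type} (l : seq X) f : phi (zsum l f) = \sum_(z <- l) phi (f z).
Proof. by elim: l => [|a l IH]; rewrite /= ?big_nil ?phi0 // big_cons phiD IH. Qed.

Lemma zr_neq0 a : a <> Z0 -> zr a != 0.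
Proof.
move=> h; apply/negP; rewrite /zr intr_eq0 => /eqP h0; apply: h.
by apply: (can_inj int_of_ZK); rewrite h0.
Qed.
Lemma phi_real a : phi (a, Z0) = zr a.
Proof. by rewrite /phi /= zr0 mul0r addr0. Qed.

Lemma sum_enum (T : finType) (F : T -> algC) : \sum_(z <- enum T) F z = \sum_z F z.
Proof. by rewrite -(sum_enum_cond xpredT). Qed.

Lemma eq_big_all {X : Type} (P : pred X) (l : seq X) (F G : X -> algC) :
  all P l -> (forall k, P k -> F k = G k) -> \sum_(k <- l) F k = \sum_(k <- l) G k.
Proof.
elim: l => [|a l IH] /=; first by rewrite !big_nil.
by move=> /andP[pa pl] h; rewrite !big_cons h // IH.
Qed.

Section Compl.
Variable T : finType.
Variable r : seq T.
Hypothesis r_uniq : uniq r.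
Hypothesis r_all : forall x, x \in r.
Variable e : kr -> T -> T -> Zw.
Definition gram k x y := zsum r (fun z => zmul (zconj (e k z x)) (e k z y)).
Definition dsq k := Z.mul (den k) (den k).
Definition Dof (ks : seq kr) := foldr (fun k acc => Z.mul (dsq k) acc) (Zpos xH) ks.
Definition compl_check (ks : seq kr) : bool :=
  let D := Dof ks in
  ~~ Z.eqb D Z0 && all (fun k => Z.eqb (Z.mul (Z.div D (dsq k)) (dsq k)) D) ks &&
  all (fun x => all (fun y =>
     zeq (zsum ks (fun k => zmul (Z.div D (dsq k), Z0) (gram k x y)))
         (if x == y then (D, Z0) else z0)) r) r.

Lemma compl_sound ks : compl_check ks ->
  complete (map (fun k => fun z x => sc k * phi (e k z x)) ks).
Proof.
rewrite /compl_check => /andP[/andP[hD hm] hall] x y.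
set D := Dof ks in hD hm hall *.
have hDz : zr D != 0 by apply: zr_neq0 => h; rewrite h in hD.
have key : forall k, Z.eqb (Z.mul (Z.div D (dsq k)) (dsq k)) D ->
    (sc k)^* * sc k = zr (Z.div D (dsq k)) / zr D.
  move=> k /Z.eqb_spec hk.
  have hmk : zr (Z.div D (dsq k)) * zr (dsq k) = zr D by rewrite -zrM hk.
  have hd : zr (den k) != 0.
    apply/negP => /eqP h0; move: hDz; rewrite -hmk /dsq zrM h0 !mulr0 eqxx //.
  have hm0 : zr (Z.div D (dsq k)) != 0.
    apply/negP => /eqP h0; move: hDz; rewrite -hmk h0 mul0r eqxx //.
  rewrite /sc cV zr_conj -hmk /dsq zrM.
  by field; rewrite hm0 hd.
rewrite big_map.
rewrite (eq_big_all (G := fun k => zr (Z.div D (dsq k)) / zr D * phi (gram k x y)) hm); last first.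
  move=> k hk; rewrite /gram phi_zsum (sum_list_cond xpredT) // mulr_sumr; apply: eq_bigr => z _.
  by rewrite -(key k hk) cM phiM phi_conj; ring.
rewrite -(eq_bigr _ (fun k _ => mulrAC _ _ _)) -mulr_suml.
rewrite (eq_bigr (fun k => phi (zmul (Z.div D (dsq k), Z0) (gram k x y)))); last first.
  by move=> k _; rewrite phiM phi_real.
rewrite -phi_zsum.
move/allP: hall => /(_ x (r_all x)) /allP /(_ y (r_all y)) /zeqP ->.
case: eqP => _; last by rewrite phi0 mul0r.
by rewrite phi_real mulfV.
Qed.
End Compl.

Fixpoint vcheck (p : prot') : bool :=
  match p with
  | PL _ => true
  | PA br => compl_check rLA eA (map fst br) && all (fun kq => vcheck kq.2) br
  | PB br => compl_check rLB eB (map fst br) && all (fun kq => vcheck kq.2) br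
  | PC br => compl_check rLC eC (map fst br) && all (fun kq => vcheck kq.2) br
  end.

Lemma valid_sound p : vcheck p -> valid (trans p).
Proof.
elim/prot'_ind2: p => [g|br IH|br IH|br IH] //= /andP[hc ha]; split.
- by rewrite -map_comp; move: (compl_sound rLA_uniq rLA_all hc); rewrite -map_comp.
- elim: br IH ha {hc} => [//|[k q] br IHbr] /= [Hq Hbr] /andP[hq hbr].
  by split; [exact: Hq | exact: IHbr].
- by rewrite -map_comp; move: (compl_sound rLB_uniq rLB_all hc); rewrite -map_comp.
- elim: br IH ha {hc} => [//|[k q] br IHbr] /= [Hq Hbr] /andP[hq hbr].
  by split; [exact: Hq | exact: IHbr].
- by rewrite -map_comp; move: (compl_sound rLC_uniq rLC_all hc); rewrite -map_comp.
- elim: br IH ha {hc} => [//|[k q] br IHbr] /= [Hq Hbr] /andP[hq hbr].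
  by split; [exact: Hq | exact: IHbr].
Qed.

Definition phifun {X : Type} (f : X -> Zw) : X -> algC := fun x => phi (f x).
Definition ket' (n j : nat) : 'I_n -> Zw := fun x => if (x == j :> nat) then z1 else z0.
Arguments ket' : clear implicits.
Definition sgnZ (s : nat) : Zw := if odd s then zm1 else z1.
Definition etaAB' (s : nat) : 'I_3 -> Zw :=
  fun t => if (t == 0 :> nat) then z1 else if (t == 1 :> nat) then sgnZ s else z0.
Definition xiAB' (s : nat) : 'I_3 -> Zw :=
  fun t => if (t == 1 :> nat) then z1 else if (t == 2 :> nat) then sgnZ s else z0.
Definition wpow (n : nat) : Zw :=
  match (n %% 3)%N with 0 => z1 | 1 => (Z0, Zpos xH) | _ => (Zneg xH, Zneg xH) end.
Definition etaC' (s : nat) : 'I_4 -> Zw := fun t => if (t < 3)%N then wpow (s * t) else z0.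
Definition xiC' (s : nat) : 'I_4 -> Zw := fun t => if (0 < t)%N then wpow (s * t.-1) else z0.
Definition pstate' (a b : 'I_3 -> Zw) (c : 'I_4 -> Zw) : idx3 -> Zw :=
  fun x => zmul (zmul (a x.1.1) (b x.1.2)) (c x.2).
Definition zneg (x : Zw) : Zw := (Z.opp x.1, Z.opp x.2).
Definition Fc' : 'I_4 -> Zw := fun t => zadd (ket' 4 1 t) (zneg (ket' 4 2 t)).

Definition setA1' := [seq pstate' (xiAB' p.1) (ket' 3 0) (etaC' p.2) | p <- pairs23].
Definition setA2' := [seq pstate' (xiAB' p.1) (etaAB' p.2) (ket' 4 3) | p <- pairs22].
Definition setA3' := [seq pstate' (ket' 3 2) (xiAB' p.1) (etaC' p.2) | p <- pairs23].
Definition setB1' := [seq pstate' (etaAB' p.1) (ket' 3 2) (xiC' p.2) | p <- pairs23].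
Definition setB2' := [seq pstate' (etaAB' p.1) (xiAB' p.2) (ket' 4 0) | p <- pairs22].
Definition setB3' := [seq pstate' (ket' 3 0) (etaAB' p.1) (xiC' p.2) | p <- pairs23].
Definition setF' := [:: pstate' (ket' 3 1) (ket' 3 1) Fc'].
Definition stopper' : idx3 -> Zw := pstate' (fun _ => z1) (fun _ => z1) (fun _ => z1).
Definition UPB' : seq (idx3 -> Zw) :=
  setA1' ++ setA2' ++ setA3' ++ setB1' ++ setB2' ++ setB3' ++ setF' ++ [:: stopper'].

Lemma phi_zm1 : phi zm1 = -1.
Proof. by rewrite /phi /zm1 /= zr0 mul0r addr0 (zrN (Zpos xH)) zr1. Qed.
Lemma phi_sgn s : phi (sgnZ s) = (-1) ^+ s.
Proof. by rewrite -signr_odd /sgnZ; case: odd; rewrite ?phi_zm1 ?phi1. Qed.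
Lemma phi_wpow n : phi (wpow n) = w3 ^+ n.
Proof.
rewrite -(expr_mod n w3_cube) /wpow.
have : (n %% 3 < 3)%N by rewrite ltn_pmod.
case: (n %% 3)%N => [|[|[|m]]] // _.
- by rewrite phi1 expr0.
- by rewrite /phi /= zr0 zr1 add0r mul1r expr1.
- by rewrite w3_sq /phi /= (zrN (Zpos xH)) zr1; ring.
Qed.

Lemma ket_eq n j : ket n j = phifun (ket' n j).
Proof.
apply: functional_extensionality => x; rewrite /ket /ket' /phifun.
by case: eqP => _; rewrite ?phi1 ?phi0.
Qed.
Lemma etaAB_eq s : etaAB s = phifun (etaAB' s).
Proof.
apply: functional_extensionality => t; rewrite /etaAB /etaAB' /phifun.
by case: ifP => _; [rewrite phi1 | case: ifP => _; [rewrite phi_sgn | rewrite phi0]].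
Qed.
Lemma xiAB_eq s : xiAB s = phifun (xiAB' s).
Proof.
apply: functional_extensionality => t; rewrite /xiAB /xiAB' /phifun.
by case: ifP => _; [rewrite phi1 | case: ifP => _; [rewrite phi_sgn | rewrite phi0]].
Qed.
Lemma etaC_eq s : etaC s = phifun (etaC' s).
Proof.
apply: functional_extensionality => t; rewrite /etaC /etaC' /phifun.
by case: ifP => _; rewrite ?phi_wpow ?phi0.
Qed.
Lemma xiC_eq s : xiC s = phifun (xiC' s).
Proof.
apply: functional_extensionality => t; rewrite /xiC /xiC' /phifun.
by case: ifP => _; rewrite ?phi_wpow ?phi0.
Qed.
Lemma pstate_eq a b c : pstate (phifun a) (phifun b) (phifun c) = phifun (pstate' a b c).
Proof. by apply: functional_extensionality => x; rewrite /pstate /pstate' /phifun !phiM. Qed.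
Lemma const_eq n : (fun _ : 'I_n => (1 : algC)) = phifun (fun _ => z1).
Proof. by apply: functional_extensionality => x; rewrite /phifun phi1. Qed.
Lemma Fc_eq : (fun t => ket 4 1 t - ket 4 2 t) = phifun Fc'.
Proof.
apply: functional_extensionality => t; rewrite /Fc' /phifun phiD !ket_eq /phifun.
by rewrite /phi /zneg /= !zrN; congr (_ + _); rewrite mulNr opprD.
Qed.

Lemma setA1_eq : setA1 = map phifun setA1'.
Proof. by rewrite /setA1 /setA1' -map_comp; apply: eq_map => p /=; rewrite xiAB_eq ket_eq etaC_eq pstate_eq. Qed.
Lemma setA2_eq : setA2 = map phifun setA2'.
Proof. by rewrite /setA2 /setA2' -map_comp; apply: eq_map => p /=; rewrite xiAB_eq ket_eq etaAB_eq pstate_eq. Qed.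
Lemma setA3_eq : setA3 = map phifun setA3'.
Proof. by rewrite /setA3 /setA3' -map_comp; apply: eq_map => p /=; rewrite xiAB_eq ket_eq etaC_eq pstate_eq. Qed.
Lemma setB1_eq : setB1 = map phifun setB1'.
Proof. by rewrite /setB1 /setB1' -map_comp; apply: eq_map => p /=; rewrite etaAB_eq ket_eq xiC_eq pstate_eq. Qed.
Lemma setB2_eq : setB2 = map phifun setB2'.
Proof. by rewrite /setB2 /setB2' -map_comp; apply: eq_map => p /=; rewrite etaAB_eq ket_eq xiAB_eq pstate_eq. Qed.
Lemma setB3_eq : setB3 = map phifun setB3'.
Proof. by rewrite /setB3 /setB3' -map_comp; apply: eq_map => p /=; rewrite etaAB_eq ket_eq xiC_eq pstate_eq. Qed.
Lemma setF_eq : setF = map phifun setF'.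
Proof. by rewrite /setF /setF' /= Fc_eq !ket_eq pstate_eq. Qed.
Lemma stopper_eq : stopper = phifun stopper'.
Proof. by rewrite /stopper /stopper' !const_eq pstate_eq. Qed.

Lemma UPB_eq : UPB = map phifun UPB'.
Proof.
by rewrite /UPB /UPB' !map_cat setA1_eq setA2_eq setA3_eq setB1_eq setB2_eq setB3_eq setF_eq stopper_eq.
Qed.

Definition Phi' (x y : 'I_2) : Zw := if (x == y :> nat) then z1 else z0.
Definition wr' (psi : idx3 -> Zw) (g : gidx) : Zw :=
  let: (a, a1, (b, b1, b2), (c, c2)) := g in
  zmul (zmul (psi (a, b, c)) (Phi' a1 b1)) (Phi' b2 c2).
Definition init (psi : idx3 -> Zw) : sst := dropz [seq (g, wr' psi g) | g <- rG].

Lemma init_ok psi g : interp (init psi) g = with_resource (phifun psi) g.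
Proof.
rewrite /init interp_dropz /interp big_map sum_list_cond ?rG_uniq // ?big_pred1_eq //; last exact: rG_all.
case: g => [[[a a1] [[b b1] b2]] [c c2]] /=.
have hP x y : phi (Phi' x y) = Phi2 x y by rewrite /Phi' /Phi2; case: eqP => _; rewrite ?phi1 ?phi0.
by rewrite !phiM !hP.
Qed.
Definition k0 : kr := KTele [:: true; false; false] false.
Definition k1 : kr := KTele [:: false; false; false; true] false.
Definition k2 : kr := KBob [:: (0%N, false, false)] false false false false.
Definition k3 : kr := KVec [:: ((Zpos xH), Z0); (Z0, Z0); (Z0, Z0)].
Definition t0 : prot' := PL 0.
Definition k4 : kr := KVec [:: (Z0, Z0); ((Zpos xH), Z0); ((Zpos xH), Z0)].
Definition k5 : kr := KVec [:: ((Zpos xH), Z0); ((Zpos xH), Z0); ((Zpos xH), Z0); (Z0, Z0)].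
Definition t1 : prot' := PL 27.
Definition k6 : kr := KVec [:: ((Zpos xH), Z0); (Z0, (Zpos xH)); ((Zneg xH), (Zneg xH)); (Z0, Z0)].
Definition k7 : kr := KVec [:: ((Zpos xH), Z0); ((Zneg xH), (Zneg xH)); (Z0, (Zpos xH)); (Z0, Z0)].
Definition t2 : prot' := PL 1.
Definition k8 : kr := KVec [:: (Z0, Z0); (Z0, Z0); (Z0, Z0); ((Zpos xH), Z0)].
Definition t3 : prot' := PC [:: (k5, t1); (k6, t0); (k7, t2); (k8, t0)].
Definition k9 : kr := KVec [:: (Z0, Z0); ((Zpos xH), Z0); ((Zneg xH), Z0)].
Definition t4 : prot' := PL 2.
Definition t5 : prot' := PL 3.
Definition t6 : prot' := PL 4.
Definition t7 : prot' := PC [:: (k5, t4); (k6, t5); (k7, t6); (k8, t0)].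
Definition t8 : prot' := PA [:: (k3, t0); (k4, t3); (k9, t7)].
Definition k10 : kr := KBob [:: (0%N, false, false)] false false false true.
Definition k11 : kr := KBob [:: (0%N, false, false)] false false true false.
Definition k12 : kr := KBob [:: (0%N, false, false)] false false true true.
Definition k13 : kr := KBob [:: (0%N, false, true); (1%N, false, true)] false false false false.
Definition k14 : kr := KVec [:: ((Zpos xH), Z0); ((Zpos xH), Z0); (Z0, Z0)].
Definition t9 : prot' := PL 6.
Definition t10 : prot' := PA [:: (k3, t0); (k4, t1); (k9, t9)].
Definition k15 : kr := KVec [:: ((Zpos xH), Z0); ((Zneg xH), Z0); (Z0, Z0)].
Definition t11 : prot' := PL 5.
Definition t12 : prot' := PL 7.
Definition t13 : prot' := PA [:: (k3, t0); (k4, t11); (k9, t12)].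
Definition k16 : kr := KVec [:: (Z0, Z0); (Z0, Z0); ((Zpos xH), Z0)].
Definition t14 : prot' := PB [:: (k14, t10); (k15, t13); (k16, t0)].
Definition k17 : kr := KBob [:: (0%N, false, true); (1%N, false, true)] false false false true.
Definition k18 : kr := KBob [:: (0%N, false, true); (1%N, false, true)] false false true false.
Definition k19 : kr := KBob [:: (0%N, false, true); (1%N, false, true)] false false true true.
Definition k20 : kr := KBob [:: (0%N, true, false); (0%N, true, true); (1%N, false, false); (1%N, true, false); (1%N, true, true); (2%N, false, false); (2%N, false, true); (2%N, true, false); (2%N, true, true)] false false false false.
Definition k21 : kr := KDiag [:: 0%N; 1%N].
Definition k22 : kr := KDiag [:: 0%N].
Definition t15 : prot' := PL 18.
Definition t16 : prot' := PB [:: (k3, t1); (k4, t1); (k9, t15)].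
Definition k23 : kr := KDiag [:: 1%N; 2%N].
Definition t17 : prot' := PL 19.
Definition t18 : prot' := PL 20.
Definition t19 : prot' := PB [:: (k3, t0); (k4, t17); (k9, t18)].
Definition t20 : prot' := PB [:: (k22, t1); (k23, t19)].
Definition t21 : prot' := PA [:: (k14, t16); (k15, t20); (k16, t0)].
Definition k24 : kr := KDiag [:: 1%N; 2%N; 3%N].
Definition k25 : kr := KVec [:: ((Zpos xH), Z0); (Z0, Z0); (Z0, Z0); (Z0, Z0)].
Definition k26 : kr := KVec [:: (Z0, Z0); ((Zpos xH), Z0); ((Zpos xH), Z0); ((Zpos xH), Z0)].
Definition k27 : kr := KVec [:: (Z0, Z0); ((Zpos xH), Z0); (Z0, (Zpos xH)); ((Zneg xH), (Zneg xH))].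
Definition t22 : prot' := PL 21.
Definition k28 : kr := KVec [:: (Z0, Z0); ((Zpos xH), Z0); ((Zneg xH), (Zneg xH)); (Z0, (Zpos xH))].
Definition t23 : prot' := PL 22.
Definition t24 : prot' := PC [:: (k25, t0); (k26, t1); (k27, t22); (k28, t23)].
Definition t25 : prot' := PL 23.
Definition t26 : prot' := PL 24.
Definition t27 : prot' := PL 25.
Definition t28 : prot' := PC [:: (k25, t0); (k26, t25); (k27, t26); (k28, t27)].
Definition t29 : prot' := PB [:: (k14, t24); (k15, t28); (k16, t0)].
Definition k29 : kr := KVec [:: (Z0, Z0); ((Zpos xH), Z0); ((Zpos xH), Z0); (Z0, Z0)].
Definition k30 : kr := KVec [:: (Z0, Z0); ((Zpos xH), Z0); ((Zneg xH), Z0); (Z0, Z0)].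
Definition t30 : prot' := PL 26.
Definition t31 : prot' := PC [:: (k25, t0); (k29, t1); (k30, t30); (k8, t0)].
Definition t32 : prot' := PA [:: (k22, t29); (k23, t31)].
Definition k31 : kr := KDiag [:: 2%N].
Definition t33 : prot' := PL 13.
Definition t34 : prot' := PL 14.
Definition t35 : prot' := PC [:: (k25, t0); (k26, t1); (k27, t33); (k28, t34)].
Definition t36 : prot' := PL 15.
Definition t37 : prot' := PL 16.
Definition t38 : prot' := PL 17.
Definition t39 : prot' := PC [:: (k25, t0); (k26, t36); (k27, t37); (k28, t38)].
Definition t40 : prot' := PA [:: (k14, t35); (k15, t39); (k16, t0)].
Definition t41 : prot' := PB [:: (k21, t32); (k31, t40)].
Definition t42 : prot' := PC [:: (k22, t21); (k24, t41)].
Definition t43 : prot' := PL 8.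
Definition t44 : prot' := PL 9.
Definition t45 : prot' := PC [:: (k5, t1); (k6, t43); (k7, t44); (k8, t1)].
Definition k32 : kr := KDiag [:: 0%N; 1%N; 2%N].
Definition t46 : prot' := PL 10.
Definition t47 : prot' := PL 11.
Definition t48 : prot' := PL 12.
Definition t49 : prot' := PC [:: (k5, t46); (k6, t47); (k7, t48); (k8, t0)].
Definition k33 : kr := KDiag [:: 3%N].
Definition t50 : prot' := PC [:: (k32, t49); (k33, t1)].
Definition t51 : prot' := PB [:: (k3, t0); (k4, t45); (k9, t50)].
Definition t52 : prot' := PA [:: (k21, t42); (k31, t51)].
Definition k34 : kr := KBob [:: (0%N, true, false); (0%N, true, true); (1%N, false, false); (1%N, true, false); (1%N, true, true); (2%N, false, false); (2%N, false, true); (2%N, true, false); (2%N, true, true)] false false false true.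
Definition k35 : kr := KVec [:: (Z0, Z0); ((Zpos xH), Z0); ((Zpos xH), Z0); ((Zneg xH), Z0)].
Definition k36 : kr := KVec [:: (Z0, Z0); ((Zpos xH), Z0); (Z0, (Zpos xH)); ((Zpos xH), (Zpos xH))].
Definition k37 : kr := KVec [:: (Z0, Z0); ((Zpos xH), Z0); ((Zneg xH), (Zneg xH)); (Z0, (Zneg xH))].
Definition t53 : prot' := PC [:: (k25, t0); (k35, t1); (k36, t22); (k37, t23)].
Definition t54 : prot' := PC [:: (k25, t0); (k35, t25); (k36, t26); (k37, t27)].
Definition t55 : prot' := PB [:: (k14, t53); (k15, t54); (k16, t0)].
Definition t56 : prot' := PA [:: (k22, t55); (k23, t31)].
Definition t57 : prot' := PC [:: (k25, t0); (k35, t1); (k36, t33); (k37, t34)].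
Definition t58 : prot' := PC [:: (k25, t0); (k35, t36); (k36, t37); (k37, t38)].
Definition t59 : prot' := PA [:: (k14, t57); (k15, t58); (k16, t0)].
Definition t60 : prot' := PB [:: (k21, t56); (k31, t59)].
Definition t61 : prot' := PC [:: (k22, t21); (k24, t60)].
Definition t62 : prot' := PA [:: (k21, t61); (k31, t51)].
Definition k38 : kr := KBob [:: (0%N, true, false); (0%N, true, true); (1%N, false, false); (1%N, true, false); (1%N, true, true); (2%N, false, false); (2%N, false, true); (2%N, true, false); (2%N, true, true)] false false true false.
Definition t63 : prot' := PA [:: (k14, t20); (k15, t16); (k16, t0)].
Definition t64 : prot' := PA [:: (k14, t39); (k15, t35); (k16, t0)].
Definition t65 : prot' := PB [:: (k21, t32); (k31, t64)].
Definition t66 : prot' := PC [:: (k22, t63); (k24, t65)].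
Definition t67 : prot' := PA [:: (k21, t66); (k31, t51)].
Definition k39 : kr := KBob [:: (0%N, true, false); (0%N, true, true); (1%N, false, false); (1%N, true, false); (1%N, true, true); (2%N, false, false); (2%N, false, true); (2%N, true, false); (2%N, true, true)] false false true true.
Definition t68 : prot' := PA [:: (k14, t58); (k15, t57); (k16, t0)].
Definition t69 : prot' := PB [:: (k21, t56); (k31, t68)].
Definition t70 : prot' := PC [:: (k22, t63); (k24, t69)].
Definition t71 : prot' := PA [:: (k21, t70); (k31, t51)].
Definition t72 : prot' := PB [:: (k2, t8); (k10, t8); (k11, t8); (k12, t8); (k13, t14); (k17, t14); (k18, t14); (k19, t14); (k20, t52); (k34, t62); (k38, t67); (k39, t71)].
Definition k40 : kr := KTele [:: false; false; false; true] true.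
Definition k41 : kr := KBob [:: (0%N, false, false)] false true false false.
Definition k42 : kr := KBob [:: (0%N, false, false)] false true false true.
Definition k43 : kr := KBob [:: (0%N, false, false)] false true true false.
Definition k44 : kr := KBob [:: (0%N, false, false)] false true true true.
Definition k45 : kr := KBob [:: (0%N, false, true); (1%N, false, true)] false true false false.
Definition k46 : kr := KBob [:: (0%N, false, true); (1%N, false, true)] false true false true.
Definition k47 : kr := KBob [:: (0%N, false, true); (1%N, false, true)] false true true false.
Definition k48 : kr := KBob [:: (0%N, false, true); (1%N, false, true)] false true true true.
Definition k49 : kr := KBob [:: (0%N, true, false); (0%N, true, true); (1%N, false, false); (1%N, true, false); (1%N, true, true); (2%N, false, false); (2%N, false, true); (2%N, true, false); (2%N, true, true)] false true false false.
Definition k50 : kr := KBob [:: (0%N, true, false); (0%N, true, true); (1%N, false, false); (1%N, true, false); (1%N, true, true); (2%N, false, false); (2%N, false, true); (2%N, true, false); (2%N, true, true)] false true false true.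
Definition k51 : kr := KBob [:: (0%N, true, false); (0%N, true, true); (1%N, false, false); (1%N, true, false); (1%N, true, true); (2%N, false, false); (2%N, false, true); (2%N, true, false); (2%N, true, true)] false true true false.
Definition k52 : kr := KBob [:: (0%N, true, false); (0%N, true, true); (1%N, false, false); (1%N, true, false); (1%N, true, true); (2%N, false, false); (2%N, false, true); (2%N, true, false); (2%N, true, true)] false true true true.
Definition t73 : prot' := PB [:: (k41, t8); (k42, t8); (k43, t8); (k44, t8); (k45, t14); (k46, t14); (k47, t14); (k48, t14); (k49, t52); (k50, t62); (k51, t67); (k52, t71)].
Definition t74 : prot' := PC [:: (k1, t72); (k40, t73)].
Definition k53 : kr := KTele [:: true; false; false] true.
Definition k54 : kr := KBob [:: (0%N, false, false)] true false false false.
Definition k55 : kr := KBob [:: (0%N, false, false)] true false false true.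
Definition k56 : kr := KBob [:: (0%N, false, false)] true false true false.
Definition k57 : kr := KBob [:: (0%N, false, false)] true false true true.
Definition k58 : kr := KBob [:: (0%N, false, true); (1%N, false, true)] true false false false.
Definition k59 : kr := KBob [:: (0%N, false, true); (1%N, false, true)] true false false true.
Definition k60 : kr := KBob [:: (0%N, false, true); (1%N, false, true)] true false true false.
Definition k61 : kr := KBob [:: (0%N, false, true); (1%N, false, true)] true false true true.
Definition k62 : kr := KBob [:: (0%N, true, false); (0%N, true, true); (1%N, false, false); (1%N, true, false); (1%N, true, true); (2%N, false, false); (2%N, false, true); (2%N, true, false); (2%N, true, true)] true false false false.
Definition k63 : kr := KBob [:: (0%N, true, false); (0%N, true, true); (1%N, false, false); (1%N, true, false); (1%N, true, true); (2%N, false, false); (2%N, false, true); (2%N, true, false); (2%N, true, true)] true false false true.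
Definition k64 : kr := KBob [:: (0%N, true, false); (0%N, true, true); (1%N, false, false); (1%N, true, false); (1%N, true, true); (2%N, false, false); (2%N, false, true); (2%N, true, false); (2%N, true, true)] true false true false.
Definition k65 : kr := KBob [:: (0%N, true, false); (0%N, true, true); (1%N, false, false); (1%N, true, false); (1%N, true, true); (2%N, false, false); (2%N, false, true); (2%N, true, false); (2%N, true, true)] true false true true.
Definition t75 : prot' := PB [:: (k54, t8); (k55, t8); (k56, t8); (k57, t8); (k58, t14); (k59, t14); (k60, t14); (k61, t14); (k62, t52); (k63, t62); (k64, t67); (k65, t71)].
Definition k66 : kr := KBob [:: (0%N, false, false)] true true false false.
Definition k67 : kr := KBob [:: (0%N, false, false)] true true false true.
Definition k68 : kr := KBob [:: (0%N, false, false)] true true true false.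
Definition k69 : kr := KBob [:: (0%N, false, false)] true true true true.
Definition k70 : kr := KBob [:: (0%N, false, true); (1%N, false, true)] true true false false.
Definition k71 : kr := KBob [:: (0%N, false, true); (1%N, false, true)] true true false true.
Definition k72 : kr := KBob [:: (0%N, false, true); (1%N, false, true)] true true true false.
Definition k73 : kr := KBob [:: (0%N, false, true); (1%N, false, true)] true true true true.
Definition k74 : kr := KBob [:: (0%N, true, false); (0%N, true, true); (1%N, false, false); (1%N, true, false); (1%N, true, true); (2%N, false, false); (2%N, false, true); (2%N, true, false); (2%N, true, true)] true true false false.
Definition k75 : kr := KBob [:: (0%N, true, false); (0%N, true, true); (1%N, false, false); (1%N, true, false); (1%N, true, true); (2%N, false, false); (2%N, false, true); (2%N, true, false); (2%N, true, true)] true true false true.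
Definition k76 : kr := KBob [:: (0%N, true, false); (0%N, true, true); (1%N, false, false); (1%N, true, false); (1%N, true, true); (2%N, false, false); (2%N, false, true); (2%N, true, false); (2%N, true, true)] true true true false.
Definition k77 : kr := KBob [:: (0%N, true, false); (0%N, true, true); (1%N, false, false); (1%N, true, false); (1%N, true, true); (2%N, false, false); (2%N, false, true); (2%N, true, false); (2%N, true, true)] true true true true.
Definition t76 : prot' := PB [:: (k66, t8); (k67, t8); (k68, t8); (k69, t8); (k70, t14); (k71, t14); (k72, t14); (k73, t14); (k74, t52); (k75, t62); (k76, t67); (k77, t71)].
Definition t77 : prot' := PC [:: (k1, t75); (k40, t76)].
Definition t78 : prot' := PA [:: (k0, t74); (k53, t77)].
Definition P0 : prot' := t78.

Lemma vcheck_P0 : vcheck P0.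
Proof. vm_compute. reflexivity. Qed.
Lemma size_UPB' : size UPB' = 28%N.
Proof. vm_compute. reflexivity. Qed.
Lemma check_P0 : all (fun i => check P0 (init (nth (fun _ => z0) UPB' i)) i) (iota 0 28).
Proof. vm_compute. reflexivity. Qed.

Theorem proposition3 :
  LOCC_perfectly_distinguishable [seq with_resource psi | psi <- UPB].
Proof.
exists (trans P0); split; first exact: (valid_sound vcheck_P0).
move=> i; rewrite size_map UPB_eq size_map size_UPB' => hi.
rewrite (nth_map (fun _ => 0)) ?size_map ?size_UPB' //.
rewrite (nth_map (fun _ => z0)) ?size_UPB' //.
have -> : with_resource (phifun (nth (fun _ => z0) UPB' i)) =
          fun g => 1 * interp (init (nth (fun _ => z0) UPB' i)) g.
  by apply: functional_extensionality => g; rewrite mul1r init_ok.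
apply: check_sound.
have := check_P0.
move/allP => /(_ i).
rewrite mem_iota => /(_ hi).
done.
Qed.
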